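(* Consider a finite MDP, a target policy $\pi$ and a behaviour policy $\mu$, and assume that for each state $x\in\mathcal{X}$ there is a unique greedy action $a^*(x)=\arg\max_{b\in\mathcal{A}}Q^\pi(x,b)$. Then there exists $\alpha\in(0,1)$ such that, letting $\widetilde{Q}_\alpha$ be the fixed point of the $\alpha$-Retrace operator $\mathcal{R}^\alpha$, the greedy policy with respect to $\widetilde{Q}_\alpha$ coincides with the greedy policy with respect to $Q^\pi$ (i.e. $\arg\max_b \widetilde{Q}_\alpha(x,b)=\{a^*(x)\}$ for all $x$), and the contraction rate of $\mathcal{R}^\alpha$ is no greater than that of $\mathcal{R}^1$ (standard Retrace). Further, if $\pi$ and $\mu$ are $(x,a)$-distinguishable under $\mu$ for all $(x,a)\in\mathcal{X}\times\mathcal{A}$, then the contraction rate of $\mathcal{R}^\alpha$ is strictly lower than that of $\mathcal{R}^1$.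
   Context: MDP: finite state space $\mathcal{X}$, finite action space $\mathcal{A}$, discount $\gamma\in[0,1)$, transition kernel $P$, bounded rewards with mean $r(x,a)$; $Q^\nu$ denotes the action-value function of a policy $\nu$. $\mathbb{E}_\mu[\cdot\mid X_0=x,A_0=a]$ denotes expectation over the trajectory with $X_{t+1}\sim P(\cdot|X_t,A_t)$, $A_{t+1}\sim\mu(\cdot|X_{t+1})$; empty products equal $1$. For target $\pi'$ and behaviour $\mu$, the Retrace operator is $$(\mathcal{R}_{\pi',\mu}Q)(x,a)=Q(x,a)+\mathbb{E}_\mu\Big[\sum_{t\ge0}\gamma^t\Big(\prod_{s=1}^t\min\big(1,\tfrac{\pi'(A_s|X_s)}{\mu(A_s|X_s)}\big)\Big)\Big(r(X_t,A_t)+\gamma\sum_{b}\pi'(b|X_{t+1})Q(X_{t+1},b)-Q(X_t,A_t)\Big)\,\Big|\,X_0=x,A_0=a\Big].$$ The $\alpha$-Retrace operator is $\mathcal{R}^\alpha=\mathcal{R}_{\alpha\pi+(1-\alpha)\mu,\mu}$. The contraction rate of an operator $T$ is $\sup_{Q\neq Q'}\|TQ-TQ'\|_\infty/\|Q-Q'\|_\infty$. The greedy policy with respect to $Q$ selects at each $x$ an action in $\arg\max_b Q(x,b)$. Policies $\pi,\mu$ are $(x,a)$-distinguishable under $\mu$ if some state $x'$ visited with positive probability at some time $t\ge0$ by the $\mu$-trajectory started from $(x,a)$ satisfies $\pi(\cdot|x')\neq\mu(\cdot|x')$. *)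

(* Defs.v *)
From mathcomp Require Import all_boot all_order all_algebra.
From mathcomp Require Import all_classical all_reals all_analysis.
Set Implicit Arguments. Unset Strict Implicit. Unset Printing Implicit Defensive.
Import Order.TTheory GRing.Theory Num.Theory.
Import numFieldNormedType.Exports.
Local Open Scope ring_scope.
Local Open Scope classical_set_scope.

Definition rseries (R : realType) (u : nat -> R) : R := limn (series u).

Section MDP.
Variables (R : realType) (X A : finType).

(* A transition kernel P x a y = P(y | x, a). *)
Definition is_kernel (P : X -> A -> X -> R) : Prop :=
  (forall x a y, 0 <= P x a y) /\ (forall x a, \sum_(y : X) P x a y = 1).

(* A (stochastic) policy nu x b = nu(b | x). *)
Definition is_policy (nu : X -> A -> R) : Prop :=
  (forall x b, 0 <= nu x b) /\ (forall x, \sum_(b : A) nu x b = 1).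

(* One-step conditional expectation of f(X_1, A_1) given (X_0,A_0)=(x,a),
   when A_1 ~ nu(.|X_1), additionally weighted by w(X_1, A_1). *)
Definition step (P : X -> A -> X -> R) (nu w : X -> A -> R)
  (f : X -> A -> R) : X -> A -> R :=
  fun x a => \sum_(y : X) P x a y * \sum_(b : A) nu y b * (w y b * f y b).

(* Action-value function of nu:
   Q^nu(x,a) = E_nu[ sum_t gamma^t r(X_t,A_t) | X_0 = x, A_0 = a ],
   the t-th expectation being (step^t r)(x,a) (nested finite sums over the
   trajectory distribution). *)
Definition Qfun (P : X -> A -> X -> R) (r : X -> A -> R) (gamma : R)
  (nu : X -> A -> R) : X -> A -> R :=
  fun x a => rseries (fun t => gamma ^+ t *
     iter t (step P nu (fun _ _ => 1)) r x a).

Definition trace_c (pi' mu : X -> A -> R) : X -> A -> R :=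
  fun y b => Num.min 1 (pi' y b / mu y b).

Definition td (P : X -> A -> X -> R) (r : X -> A -> R) (gamma : R)
  (pi' : X -> A -> R) (Q : X -> A -> R) : X -> A -> R :=
  fun x a => r x a + gamma * \sum_(y : X) P x a y * \sum_(b : A) pi' y b * Q y b
             - Q x a.

(* Retrace operator R_{pi',mu}: the t-th term
   E_mu[ (prod_{s=1}^t c_s) delta_t | X_0 = x, A_0 = a ] is computed as nested
   finite sums over the trajectory, i.e. (step_mu,c ^t delta)(x,a). *)
Definition retrace (P : X -> A -> X -> R) (r : X -> A -> R) (gamma : R)
  (pi' mu : X -> A -> R) (Q : X -> A -> R) : X -> A -> R :=
  fun x a => Q x a + rseries (fun t => gamma ^+ t *
     iter t (step P mu (trace_c pi' mu)) (td P r gamma pi' Q) x a).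

Definition mixpol (alpha : R) (pi mu : X -> A -> R) : X -> A -> R :=
  fun x b => alpha * pi x b + (1 - alpha) * mu x b.

Definition alpha_retrace P r gamma (alpha : R) (pi mu : X -> A -> R) :=
  retrace P r gamma (mixpol alpha pi mu) mu.

Definition supnorm (Q : X -> A -> R) : R :=
  \big[Num.max/0]_(p : X * A) `|Q p.1 p.2|.

Definition contraction_rate (T : (X -> A -> R) -> (X -> A -> R)) : R :=
  sup [set k : R | exists Q Q' : X -> A -> R, Q <> Q' /\
         k = supnorm (fun x a => T Q x a - T Q' x a) /
             supnorm (fun x a => Q x a - Q' x a)].

Definition greedy (Q : X -> A -> R) (x : X) : set A :=
  [set b | forall b', Q x b' <= Q x b].

(* probability that the mu-trajectory started at (x,a) is at state x' at time t *)
Fixpoint visit_prob (P : X -> A -> X -> R) (mu : X -> A -> R) (t : nat)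
  (x : X) (a : A) (x' : X) : R :=
  match t with
  | 0 => if x == x' then 1 else 0
  | t'.+1 => \sum_(y : X) P x a y * \sum_(b : A) mu y b * visit_prob P mu t' y b x'
  end.

Definition distinguishable (P : X -> A -> X -> R) (pi mu : X -> A -> R)
  (x : X) (a : A) : Prop :=
  exists (t : nat) (x' : X), 0 < visit_prob P mu t x a x' /\
    exists b, pi x' b <> mu x' b.

End MDP.

(* Main.v *)
Require Import Defs.
From mathcomp Require Import all_boot all_order all_algebra.
From mathcomp Require Import all_classical all_reals all_analysis.
From mathcomp Require Import ring lra.
Import Order.TTheory GRing.Theory Num.Theory.
Import numFieldNormedType.Exports.
Local Open Scope ring_scope.
Local Open Scope classical_set_scope.
Set Implicit Arguments. Unset Strict Implicit.

Section StepLemmas.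
Variables (R : realType) (X A : finType).
Variables (P : X -> A -> X -> R) (nu w : X -> A -> R).
Hypothesis hP : is_kernel P.
Hypothesis hnu : is_policy nu.
Hypothesis hw0 : forall y b, 0 <= w y b.
Hypothesis hw1 : forall y b, w y b <= 1.

Local Notation C := (step P nu w).

Lemma stepB f g x a : C (fun y b => f y b - g y b) x a = C f x a - C g x a.
Proof.
rewrite /step -sumrB; apply: eq_bigr => y _; rewrite -mulrBr -sumrB.
congr (_ * _); apply: eq_bigr => b _; by rewrite !mulrBr.
Qed.

Lemma stepD f g x a : C (fun y b => f y b + g y b) x a = C f x a + C g x a.
Proof.
rewrite /step -big_split; apply: eq_bigr => y _ /=; rewrite -mulrDr -big_split /=.
congr (_ * _); apply: eq_bigr => b _; by rewrite !mulrDr.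
Qed.

Lemma stepZ k f x a : C (fun y b => k * f y b) x a = k * C f x a.
Proof.
rewrite /step mulr_sumr; apply: eq_bigr => y _ /=; rewrite [RHS]mulrCA [in RHS]mulr_sumr.
congr (_ * _); apply: eq_bigr => b _ /=; ring.
Qed.

Lemma step0 x a : C (fun _ _ => 0) x a = 0.
Proof. by rewrite /step big1 // => y _; rewrite big1 ?mulr0 // => b _; rewrite !mulr0. Qed.

Lemma step_le f g x a : (forall y b, f y b <= g y b) -> C f x a <= C g x a.
Proof.
move=> fg; rewrite /step; apply: ler_sum => y _; apply: ler_wpM2l; first by case: hP.
apply: ler_sum => b _; apply: ler_wpM2l; first by case: hnu.
by apply: ler_wpM2l.
Qed.

Lemma step_ge0 f x a : (forall y b, 0 <= f y b) -> 0 <= C f x a.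
Proof. by move=> f0; rewrite -(step0 x a); apply: step_le. Qed.

Lemma step_abs f x a : `|C f x a| <= C (fun y b => `|f y b|) x a.
Proof.
rewrite /step; apply: le_trans (ler_norm_sum _ _ _) _; apply: ler_sum => y _.
rewrite normrM ger0_norm; last by case: hP.
apply: ler_wpM2l; first by case: hP.
apply: le_trans (ler_norm_sum _ _ _) _; apply: ler_sum => b _.
rewrite normrM ger0_norm; last by case: hnu.
rewrite normrM ger0_norm //.
Qed.

Lemma step_le_const f m x a : 0 <= m -> (forall y b, f y b <= m) -> C f x a <= m.
Proof.
move=> m0 fm; rewrite /step.
have -> : m = \sum_(y : X) P x a y * m.
  by rewrite -mulr_suml; case: hP => _ ->; rewrite mul1r.
apply: ler_sum => y _; apply: ler_wpM2l; first by case: hP.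
have -> : m = \sum_(b : A) nu y b * m.
  by rewrite -mulr_suml; case: hnu => _ ->; rewrite mul1r.
apply: ler_sum => b _; apply: ler_wpM2l; first by case: hnu.
apply: le_trans (_ : w y b * m <= m).
  by apply: ler_wpM2l.
by rewrite ler_piMl.
Qed.

Lemma maxprin g E : 0 <= g -> g < 1 ->
  (forall x a, E x a <= g * C E x a) -> forall x a, E x a <= 0.
Proof.
move=> g0 g1 hE.
pose m := \big[Num.max/0]_(p : X * A) E p.1 p.2.
have hm0 : 0 <= m by rewrite /m; exact: bigmax_ge_id.
have hEm : forall x a, E x a <= m by move=> x a; exact: (le_bigmax _ _ (x, a)).
have hm : m <= g * m.
  apply: bigmax_le; first by rewrite mulr_ge0.
  move=> [x a] _ /=; apply: le_trans (hE x a) _; apply: ler_wpM2l => //.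
  exact: step_le_const.
move=> x a; apply: le_trans (hEm x a) _; nra.
Qed.


Lemma step_sum (F : nat -> X -> A -> R) n x a :
  C (fun y b => \sum_(0 <= t < n) F t y b) x a = \sum_(0 <= t < n) C (F t) x a.
Proof.
elim: n => [|n IH].
  by rewrite big_geq // /step big1 // => y _; rewrite big1 ?mulr0 // => b _; rewrite big_geq // !mulr0.
rewrite big_nat_recr //= -IH -stepD; congr (step _ _ _ _ _ _).
by apply/funext => y; apply/funext => b; rewrite big_nat_recr.
Qed.

Lemma iter_bound v B : 0 <= B -> (forall y b, `|v y b| <= B) ->
  forall t x a, `|iter t C v x a| <= B.
Proof.
move=> B0 hv; elim => [|t IH] x a //=.
apply: le_trans (step_abs _ _ _) _; exact: step_le_const.
Qed.

End StepLemmas.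

Lemma cvg_bigsum (R : realType) (I : Type) (s : seq I) (F : I -> nat -> R) (l : I -> R) :
  (forall i, F i @ \oo --> l i) ->
  (fun n => \sum_(i <- s) F i n) @ \oo --> \sum_(i <- s) l i.
Proof.
move=> hF; elim: s => [|i s IH].
  rewrite big_nil; under eq_fun do rewrite big_nil; exact: cvg_cst.
rewrite big_cons; under eq_fun do rewrite big_cons; exact: cvgD.
Qed.

Section SeriesLemma.
Variables (R : realType) (X A : finType).
Variables (P : X -> A -> X -> R) (nu w : X -> A -> R).
Hypothesis hP : is_kernel P.
Hypothesis hnu : is_policy nu.
Hypothesis hw0 : forall y b, 0 <= w y b.
Hypothesis hw1 : forall y b, w y b <= 1.
Local Notation C := (step P nu w).

Lemma step_cvg (f : nat -> X -> A -> R) l x a :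
  (forall y b, (fun n => f n y b) @ \oo --> l y b) ->
  (fun n => C (f n) x a) @ \oo --> C l x a.
Proof.
move=> hf; rewrite /step; apply: cvg_bigsum => y; apply: cvgM; first exact: cvg_cst.
apply: cvg_bigsum => b; apply: cvgM; first exact: cvg_cst.
apply: cvgM; first exact: cvg_cst.
exact: hf.
Qed.

Lemma series_cvg g v x a : 0 <= g -> g < 1 ->
  cvgn (series (fun t => g ^+ t * iter t C v x a)).
Proof.
move=> g0 g1.
pose B := \big[Num.max/0]_(p : X * A) `|v p.1 p.2|.
have B0 : 0 <= B by exact: bigmax_ge_id.
have hB : forall y b, `|v y b| <= B by move=> y b; exact: (le_bigmax _ _ (y, b)).
apply: normed_cvg.
apply: (@series_le_cvg _ _ (geometric B g)).
- by move=> n /=; exact: normr_ge0.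
- by move=> n; rewrite /geometric mulr_ge0 // exprn_ge0.
- move=> n /=; rewrite /geometric normrM ger0_norm ?exprn_ge0 // mulrC.
  apply: ler_wpM2r; first exact: exprn_ge0.
  exact: iter_bound.
- by apply: is_cvg_geometric_series; rewrite ger0_norm.
Qed.

Lemma series_fix g v x a : 0 <= g -> g < 1 ->
  let u := fun x a => rseries (fun t => g ^+ t * iter t C v x a) in
  u x a = v x a + g * C u x a.
Proof.
move=> g0 g1 u.
pose s := fun n x a => series (fun t => g ^+ t * iter t C v x a) n.
have hs : forall y b, (fun n => s n y b) @ \oo --> u y b.
  move=> y b; have := @series_cvg g v y b g0 g1; rewrite /u /rseries /s; move=> /cvgP H; exact: H.
have e : forall n, s n.+1 x a = v x a + g * C (s n) x a.
  move=> n; rewrite /s /series /= big_nat_recl //= expr0 mul1r; congr (_ + _).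
  rewrite step_sum mulr_sumr; apply: eq_bigr => t _.
  by rewrite stepZ exprS mulrA.
have h1 : (fun n => s n.+1 x a) @ \oo --> v x a + g * C u x a.
  rewrite (_ : (fun n => s n.+1 x a) = (fun n => v x a + g * C (s n) x a)); last first.
    by apply/funext => n; exact: e.
  apply: cvgD; first exact: cvg_cst.
  apply: cvgM; first exact: cvg_cst.
  exact: step_cvg.
have h2 : (fun n => s n.+1 x a) @ \oo --> u x a.
  by rewrite (cvg_shiftS (fun n => s n x a)); exact: hs.
exact: (cvg_unique _ h2 h1).
Qed.

End SeriesLemma.



Section Generic.
Variables (R : realType) (X A : finType).

Lemma supnorm_ge (f : X -> A -> R) x a : `|f x a| <= supnorm f.
Proof. exact: (le_bigmax _ (fun p : X * A => `|f p.1 p.2|) (x, a)). Qed.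

Lemma supnorm_ge0 (f : X -> A -> R) : 0 <= supnorm f.
Proof. exact: bigmax_ge_id. Qed.

Lemma supnorm_le (f : X -> A -> R) m : 0 <= m -> (forall x a, `|f x a| <= m) ->
  supnorm f <= m.
Proof. by move=> m0 h; apply: bigmax_le => // [[x a]] _; exact: h. Qed.

Lemma sum_pos (I : finType) (f : I -> R) i :
  (forall j, 0 <= f j) -> 0 < f i -> 0 < \sum_j f j.
Proof.
move=> h0 hi; rewrite (bigD1 i) //=.
have : 0 <= \sum_(j | j != i) f j by apply: sumr_ge0 => j _.
lra.
Qed.

Lemma sum_pos_ex (I : finType) (f : I -> R) :
  0 < \sum_j f j -> exists j, 0 < f j.
Proof.
move=> hs; have [//|H] := pselect (exists j, 0 < f j).
have : \sum_j f j <= 0.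
  apply: sumr_le0 => j _; rewrite leNgt; apply/negP => hj; apply: H; by exists j.
lra.
Qed.

Lemma mixpol_policy (pi mu : X -> A -> R) al : 0 <= al -> al <= 1 ->
  is_policy pi -> is_policy mu -> is_policy (mixpol al pi mu).
Proof.
move=> a0 a1 [p0 p1] [m0 m1]; split.
  move=> x b; rewrite /mixpol addr_ge0 // mulr_ge0 //; lra.
move=> x; rewrite /mixpol big_split /= -!mulr_sumr p1 m1; ring.
Qed.

Lemma trace_c_ge0 (p m : X -> A -> R) y b :
  (forall y b, 0 <= p y b) -> (forall y b, 0 <= m y b) -> 0 <= trace_c p m y b.
Proof.
move=> hp hm; rewrite /trace_c le_min ler01 /=.
by rewrite divr_ge0.
Qed.

Lemma trace_c_le1 (p m : X -> A -> R) y b : trace_c p m y b <= 1.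
Proof. by rewrite /trace_c ge_min lexx. Qed.

End Generic.



Section MDP1.
Variables (R : realType) (X A : finType) (P : X -> A -> X -> R) (r : X -> A -> R)
  (gamma : R) (pi mu : X -> A -> R).
Hypotheses (hP : is_kernel P) (g0 : 0 < gamma) (g1 : gamma < 1)
  (hpi : is_policy pi) (hmu : is_policy mu).

Definition Userie (C : (X -> A -> R) -> X -> A -> R) (g : R) (v : X -> A -> R) :
  X -> A -> R := fun x a => rseries (fun t => g ^+ t * iter t C v x a).

Lemma w1_0 (y : X) (b : A) : (0 : R) <= (fun _ _ => 1) y b.
Proof. exact: ler01. Qed.
Lemma w1_1 (y : X) (b : A) : (fun _ _ => 1) y b <= (1 : R).
Proof. exact: lexx. Qed.

Lemma bellman nu : is_policy nu -> forall x a,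
  Qfun P r gamma nu x a = r x a + gamma * step P nu (fun _ _ => 1) (Qfun P r gamma nu) x a.
Proof. move=> hnu x a; exact: (series_fix hP hnu w1_0 w1_1 r x a (ltW g0) g1). Qed.

Lemma td_eq p Q x a :
  td P r gamma p Q x a = r x a + gamma * step P p (fun _ _ => 1) Q x a - Q x a.
Proof.
rewrite /td /step; congr (_ + _ * _ - _); apply: eq_bigr => y _; congr (_ * _).
by apply: eq_bigr => b _; rewrite mul1r.
Qed.

Lemma Mconst p k x a : is_policy p -> step P p (fun _ _ => 1) (fun _ _ => k) x a = k.
Proof.
move=> [_ hp1]; rewrite /step.
rewrite (eq_bigr (fun y => P x a y * k)); first by rewrite -mulr_suml; case: hP => _ ->; rewrite mul1r.
move=> y _; congr (_ * _).
by rewrite (eq_bigr (fun b => p y b * k)) ?(@mulr_suml _ _) -?mulr_suml ?hp1 ?mul1r // => b _; rewrite mul1r.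
Qed.

Lemma step_mix al w f x a :
  step P (mixpol al pi mu) w f x a = al * step P pi w f x a + (1 - al) * step P mu w f x a.
Proof.
rewrite /step /mixpol !mulr_sumr -big_split /=; apply: eq_bigr => y _.
rewrite mulrCA [(1 - al) * _]mulrCA -mulrDr; congr (_ * _).
rewrite !mulr_sumr -big_split /=; apply: eq_bigr => b _; ring.
Qed.

Lemma c_ge0 p : is_policy p -> forall y b, 0 <= trace_c p mu y b.
Proof. move=> [hp _] y b; apply: trace_c_ge0 => // ??; by case: hmu. Qed.
Lemma c_le1 p : forall (y : X) (b : A), trace_c p mu y b <= 1.
Proof. by move=> y b; apply: trace_c_le1. Qed.

Lemma series_fix' p v x a : is_policy p ->
  Userie (step P mu (trace_c p mu)) gamma v x a =
  v x a + gamma * step P mu (trace_c p mu) (Userie (step P mu (trace_c p mu)) gamma v) x a.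
Proof. move=> hp; exact: (series_fix hP hmu (c_ge0 hp) (@c_le1 p) v x a (ltW g0) g1). Qed.

Lemma retraceE p Q x a : retrace P r gamma p mu Q x a =
  Q x a + Userie (step P mu (trace_c p mu)) gamma (td P r gamma p Q) x a.
Proof. by []. Qed.

Lemma fix_td p Q : is_policy p -> retrace P r gamma p mu Q = Q ->
  forall x a, td P r gamma p Q x a = 0.
Proof.
move=> hp hQ.
have hu : Userie (step P mu (trace_c p mu)) gamma (td P r gamma p Q) = fun _ _ => 0.
  apply/funext => x; apply/funext => a.
  have := congr1 (fun F => F x a) hQ; rewrite /= retraceE; lra.
move=> x a; have := series_fix' (td P r gamma p Q) x a hp.
rewrite hu step0; lra.
Qed.

Lemma iter0 (C : (X -> A -> R) -> X -> A -> R) t :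
  (forall x a, C (fun _ _ => 0) x a = 0) -> iter t C (fun _ _ => 0) = fun _ _ => 0.
Proof.
move=> h; elim: t => [|t IH] //=; rewrite IH; apply/funext => x; apply/funext => a; exact: h.
Qed.

Lemma td_fix p Q : (forall x a, td P r gamma p Q x a = 0) -> retrace P r gamma p mu Q = Q.
Proof.
move=> h; apply/funext => x; apply/funext => a; rewrite retraceE.
have -> : td P r gamma p Q = fun _ _ => 0 by apply/funext => y; apply/funext => b.
rewrite /Userie.
have -> : (fun t => gamma ^+ t * iter t (step P mu (trace_c p mu)) (fun _ _ => 0) x a)
   = fun _ => 0.
  apply/funext => t; rewrite iter0 ?mulr0 //; move=> ??; exact: step0.
rewrite /rseries.
have -> : series (fun _ : nat => 0 : R) = fun _ => 0.
  by apply/funext => n; rewrite /series /= big1.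
by rewrite lim_cst; [exact: addr0|exact: Rhausdorff].
Qed.

End MDP1.



Section MDP2.
Variables (R : realType) (X A : finType) (P : X -> A -> X -> R) (r : X -> A -> R)
  (gamma : R) (pi mu : X -> A -> R).
Hypotheses (hP : is_kernel P) (g0 : 0 < gamma) (g1 : gamma < 1)
  (hpi : is_policy pi) (hmu : is_policy mu).

Local Notation M nu := (step P nu (fun _ _ => 1)).
Local Notation Q1 := (Qfun P r gamma pi).

Lemma M_bound nu f B x a : is_policy nu -> 0 <= B -> (forall y b, `|f y b| <= B) ->
  `|M nu f x a| <= B.
Proof.
move=> hnu B0 hf; apply: le_trans (step_abs hP hnu (@w1_0 R X A) _ _ _) _.
exact: (step_le_const hP hnu (@w1_0 R X A) (@w1_1 R X A)).
Qed.

Lemma close_fix al Qt : 0 <= al -> al <= 1 ->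
  (forall x a, td P r gamma (mixpol al pi mu) Qt x a = 0) ->
  forall x a, `|Qt x a - Q1 x a| <= 2 * gamma * (1 - al) * supnorm Q1 / (1 - gamma).
Proof.
move=> a0 a1 htd.
set p := mixpol al pi mu.
have hp : is_policy p by exact: mixpol_policy.
set B := supnorm Q1.
have B0 : 0 <= B by exact: supnorm_ge0.
set K := 2 * gamma * (1 - al) * B / (1 - gamma).
have hg : 1 - gamma != 0 by rewrite subr_eq0 gt_eqF.
have hK : (1 - gamma) * K = 2 * gamma * (1 - al) * B by rewrite /K mulrC divfK.
have bQt : forall x a, Qt x a = r x a + gamma * M p Qt x a.
  move=> x a; have := htd x a; rewrite td_eq; lra.
have bQ1 := bellman r hP g0 g1 hpi.
pose D := fun x a => Qt x a - Q1 x a.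
have hD : forall x a, D x a = gamma * M p D x a + gamma * ((1 - al) * (M mu Q1 x a - M pi Q1 x a)).
  move=> x a; rewrite /D {1}bQt {1}bQ1 stepB /p !step_mix; ring.
have hbd : forall x a, `|M mu Q1 x a - M pi Q1 x a| <= 2 * B.
  move=> x a; apply: le_trans (ler_normB _ _) _.
  have h1 := M_bound x a hmu B0 (supnorm_ge Q1).
  have h2 := M_bound x a hpi B0 (supnorm_ge Q1).
  lra.
pose E := fun x a => `|D x a| - K.
have hE : forall x a, E x a <= gamma * M p E x a.
  move=> x a; rewrite /E stepB Mconst //.
  have h1 : `|M p D x a| <= M p (fun y b => `|D y b|) x a.
    exact: (step_abs hP hp (@w1_0 R X A)).
  have h2 : `|(1 - al) * (M mu Q1 x a - M pi Q1 x a)| <= (1 - al) * (2 * B).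
    rewrite normrM ger0_norm; last lra.
    by apply: ler_wpM2l; [lra | exact: hbd].
  have h3 : `|D x a| <= gamma * `|M p D x a| + gamma * `|(1 - al) * (M mu Q1 x a - M pi Q1 x a)|.
    rewrite {1}hD; apply: le_trans (ler_normD _ _) _.
    by rewrite !normrM (ger0_norm (ltW g0)).
  have h4 : gamma * ((1 - al) * (2 * B)) = (1 - gamma) * K by rewrite hK; ring.
  have h5 := ler_wpM2l (ltW g0) h1. have h6 := ler_wpM2l (ltW g0) h2. lra.
move=> x a.
have := maxprin hP hp (@w1_0 R X A) (@w1_1 R X A) (ltW g0) g1 hE x a.
rewrite /E /D; lra.
Qed.

End MDP2.



Section MDP3.
Variables (R : realType) (X A : finType) (P : X -> A -> X -> R) (r : X -> A -> R)
  (gamma : R) (p mu : X -> A -> R).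
Hypotheses (hP : is_kernel P) (g0 : 0 < gamma) (g1 : gamma < 1)
  (hp : is_policy p) (hmu : is_policy mu).

Local Notation M nu := (step P nu (fun _ _ => 1)).
Local Notation c := (trace_c p mu).
Local Notation C := (step P mu (trace_c p mu)).

Definition dstep (f : X -> A -> R) x a :=
  \sum_(y : X) P x a y * \sum_(b : A) (p y b - mu y b * c y b) * f y b.

Lemma M_minus_C f x a : M p f x a - C f x a = dstep f x a.
Proof.
rewrite /step /dstep -sumrB; apply: eq_bigr => y _; rewrite -mulrBr -sumrB.
congr (_ * _); apply: eq_bigr => b _; ring.
Qed.

Lemma dcoef_ge0 y b : 0 <= p y b - mu y b * c y b.
Proof.
rewrite subr_ge0.
have [m0|m0] := eqVneq (mu y b) 0; first by rewrite m0 mul0r; case: hp.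
have hm : 0 <= mu y b by case: hmu.
have hc : c y b <= p y b / mu y b by rewrite /trace_c ge_min lexx orbT.
apply: le_trans (ler_wpM2l hm hc) _.
by rewrite mulrC divfK.
Qed.

Lemma dstep_bound f N x a : (forall y b, `|f y b| <= N) ->
  `|dstep f x a| <= N - C (fun _ _ => N) x a.
Proof.
move=> hf.
have -> : N - C (fun _ _ => N) x a = dstep (fun _ _ => N) x a.
  by rewrite -M_minus_C Mconst.
rewrite /dstep; apply: le_trans (ler_norm_sum _ _ _) _; apply: ler_sum => y _.
rewrite normrM ger0_norm; last by case: hP.
apply: ler_wpM2l; first by case: hP.
apply: le_trans (ler_norm_sum _ _ _) _; apply: ler_sum => b _.
rewrite normrM ger0_norm; last exact: dcoef_ge0.
by apply: ler_wpM2l; [exact: dcoef_ge0 | exact: hf].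
Qed.

Definition Wf (Q Q' : X -> A -> R) x a :=
  retrace P r gamma p mu Q x a - retrace P r gamma p mu Q' x a.

Lemma W_eq Q Q' x a :
  Wf Q Q' x a = gamma * dstep (fun y b => Q y b - Q' y b) x a + gamma * C (Wf Q Q') x a.
Proof.
set U := Userie C gamma.
have e1 : C (U (td P r gamma p Q)) x a - C (U (td P r gamma p Q')) x a =
          C (Wf Q Q') x a - C (fun y b => Q y b - Q' y b) x a.
  rewrite -!stepB; congr (step _ _ _ _ _ _); apply/funext => y; apply/funext => b.
  rewrite /Wf !retraceE -/U; ring.
have e2 := M_minus_C (fun y b => Q y b - Q' y b) x a.
rewrite stepB in e2.
have e1' := congr1 (fun z => gamma * z) e1.
have e2' := congr1 (fun z => gamma * z) e2.
rewrite /Wf !retraceE (series_fix' hP g0 g1 hmu (td P r gamma p Q) x a hp).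
rewrite (series_fix' hP g0 g1 hmu (td P r gamma p Q') x a hp) !td_eq.
rewrite -/U /=. lra.
Qed.


Definition rho := Wf (fun _ _ => 1) (fun _ _ => 0).

Lemma hc0 : forall y b, 0 <= c y b. Proof. exact: (c_ge0 hmu hp). Qed.
Lemma hc1 : forall y b, c y b <= 1. Proof. exact: c_le1. Qed.

Lemma C1_le1 x a : C (fun _ _ => 1) x a <= 1.
Proof. by apply: (step_le_const hP hmu hc0 hc1) => //. Qed.

Lemma rho_eq x a : rho x a = gamma * (1 - C (fun _ _ => 1) x a) + gamma * C rho x a.
Proof.
rewrite /rho W_eq; congr (gamma * _ + _).
rewrite [F in dstep F](_ : _ = fun _ _ => 1); last first.
  by apply/funext => y; apply/funext => b; rewrite subr0.
by rewrite -M_minus_C Mconst.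
Qed.

Lemma rho_ge0 x a : 0 <= rho x a.
Proof.
suff : 0 - rho x a <= 0 by lra.
apply: (maxprin hP hmu hc0 hc1 (ltW g0) g1 (E := fun x a => 0 - rho x a)) => y b.
rewrite stepB step0 rho_eq.
have h1 := C1_le1 y b.
have h2 : 0 <= gamma * (1 - C (fun _ _ => 1) y b) by rewrite mulr_ge0 // ?subr_ge0 // ltW.
lra.
Qed.

Lemma W_bound Q Q' N : 0 <= N -> (forall y b, `|Q y b - Q' y b| <= N) ->
  forall x a, `|Wf Q Q' x a| <= N * rho x a.
Proof.
move=> N0 hN.
suff : forall x a, `|Wf Q Q' x a| - N * rho x a <= 0 by move=> h x a; have := h x a; lra.
apply: (maxprin hP hmu hc0 hc1 (ltW g0) g1 (E := fun x a => `|Wf Q Q' x a| - N * rho x a)).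
move=> x a; rewrite stepB stepZ.
have h1 : `|Wf Q Q' x a| <= gamma * `|dstep (fun y b => Q y b - Q' y b) x a| + gamma * `|C (Wf Q Q') x a|.
  rewrite {1}W_eq; apply: le_trans (ler_normD _ _) _.
  by rewrite !normrM (ger0_norm (ltW g0)).
have h2 := dstep_bound x a hN.
have eN : C (fun _ _ => N) x a = N * C (fun _ _ => 1) x a.
  rewrite -stepZ; congr (step _ _ _ _ _ _); apply/funext => y; apply/funext => b.
  by rewrite mulr1.
rewrite eN in h2.
have h3 : `|C (Wf Q Q') x a| <= C (fun y b => `|Wf Q Q' y b|) x a.
  exact: (step_abs hP hmu hc0).
have h2' := ler_wpM2l (ltW g0) h2.
have h3' := ler_wpM2l (ltW g0) h3.
rewrite rho_eq; lra.
Qed.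

Lemma ne10 (x0 : X) (a0 : A) : (fun _ _ => 1) <> (fun _ _ => 0 : R) :> (X -> A -> R).
Proof. by move=> h; have := congr1 (fun F => F x0 a0) h => /= /eqP; rewrite oner_eq0. Qed.

Lemma rate_eq (x0 : X) (a0 : A) :
  contraction_rate (retrace P r gamma p mu) = supnorm rho.
Proof.
rewrite /contraction_rate.
set S := [set k : R | _].
have ub : ubound S (supnorm rho).
  move=> k [Q [Q' [hne ->]]].
  set N := supnorm (fun x a => Q x a - Q' x a).
  have hN : 0 < N.
    have [[x [a hxa]]|H] := pselect (exists x a, Q x a != Q' x a).
      apply: lt_le_trans (supnorm_ge (fun x a => Q x a - Q' x a) x a).
      by rewrite normr_gt0 subr_eq0.
    exfalso; apply: hne; apply/funext => x; apply/funext => a.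
    by case: (eqVneq (Q x a) (Q' x a)) => // h; exfalso; apply: H; exists x, a.
  rewrite ler_pdivrMr //.
  apply: supnorm_le; first by rewrite mulr_ge0 // ?supnorm_ge0 // ltW.
  move=> x a.
  apply: le_trans (W_bound (ltW hN) (supnorm_ge (fun x a => Q x a - Q' x a)) x a) _.
  rewrite mulrC; apply: ler_wpM2r; first exact: ltW.
  apply: le_trans (supnorm_ge rho x a); exact: ler_norm.
have mem : S (supnorm rho).
  exists (fun _ _ => 1), (fun _ _ => 0); split; first exact: ne10 x0 a0.
  have -> : supnorm (fun (x : X) (a : A) => (fun _ _ => 1) x a - (fun _ _ => 0) x a : R) = 1.
    apply/eqP; rewrite eq_le; apply/andP; split.
      by apply: supnorm_le => // x a /=; rewrite subr0 normr1.
    by have := supnorm_ge (fun (x : X) (a : A) => (fun _ _ => 1) x a - (fun _ _ => 0) x a : R) x0 a0; rewrite /= subr0 normr1.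
  by rewrite divr1.
apply/eqP; rewrite eq_le; apply/andP; split.
  by apply: ge_sup => //; exists (supnorm rho).
by apply: sup_upper_bound => //; split; [exists (supnorm rho) | exists (supnorm rho)].
Qed.

Definition Tf x a := 1 - rho x a.

Lemma T_eq x a : Tf x a = (1 - gamma) + gamma * C Tf x a.
Proof. rewrite /Tf (stepB P mu c (fun _ _ => 1) rho) rho_eq; lra. Qed.

Lemma T_ge x a : 1 - gamma <= Tf x a.
Proof.
have T0 : forall x a, 0 <= Tf x a.
  suff : forall x a, 0 - Tf x a <= 0 by move=> h y b; have := h y b; lra.
  apply: (maxprin hP hmu hc0 hc1 (ltW g0) g1 (E := fun x a => 0 - Tf x a)) => y b.
  rewrite stepB step0 T_eq; set z := C Tf y b; have := g1; lra.
rewrite T_eq.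
have : 0 <= gamma * C Tf x a by rewrite mulr_ge0 ?(ltW g0) //; exact: (step_ge0 hP hmu hc0).
lra.
Qed.

End MDP3.



Lemma pos_prod (R : realType) (u v : R) : 0 <= u -> 0 < u * v -> 0 < u /\ 0 < v.
Proof.
move=> u0 h.
have hu : 0 < u.
  rewrite lt_def u0 andbT; apply/negP => /eqP hu; move: h; rewrite hu mul0r ltxx //.
by split => //; rewrite -(pmulr_rgt0 v hu).
Qed.

Section Compare.
Variables (R : realType) (X A : finType) (P : X -> A -> X -> R) (r : X -> A -> R)
  (gamma : R) (p q mu : X -> A -> R).
Hypotheses (hP : is_kernel P) (g0 : 0 < gamma) (g1 : gamma < 1)
  (hp : is_policy p) (hq : is_policy q) (hmu : is_policy mu)
  (hcq : forall y b, trace_c q mu y b <= trace_c p mu y b).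

Local Notation Cp := (step P mu (trace_c p mu)).
Local Notation Cq := (step P mu (trace_c q mu)).
Local Notation Tp := (Tf P r gamma p mu).
Local Notation Tq := (Tf P r gamma q mu).

Definition ediff (f : X -> A -> R) x a :=
  \sum_(y : X) P x a y * \sum_(b : A) mu y b * ((trace_c p mu y b - trace_c q mu y b) * f y b).

Lemma Cdiff f x a : Cp f x a - Cq f x a = ediff f x a.
Proof.
rewrite /step /ediff -sumrB; apply: eq_bigr => y _; rewrite -mulrBr -sumrB.
congr (_ * _); apply: eq_bigr => b _; ring.
Qed.

Lemma Tq_ge y b : 1 - gamma <= Tq y b.
Proof. exact: (T_ge r hP g0 g1 hq hmu). Qed.

Lemma ediff_ge0 x a : 0 <= ediff Tq x a.
Proof.
apply: sumr_ge0 => y _; apply: mulr_ge0; first by case: hP.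
apply: sumr_ge0 => b _; apply: mulr_ge0; first by case: hmu.
apply: mulr_ge0; first by rewrite subr_ge0.
have := Tq_ge y b; have := g1; lra.
Qed.

Lemma D_eq x a : Tp x a - Tq x a =
  gamma * Cp (fun y b => Tp y b - Tq y b) x a + gamma * ediff Tq x a.
Proof.
rewrite {1}(T_eq r hP g0 g1 hp hmu) {1}(T_eq r hP g0 g1 hq hmu) -Cdiff (stepB P mu (trace_c p mu) Tp Tq).
ring.
Qed.

Lemma D_ge0 x a : 0 <= Tp x a - Tq x a.
Proof.
suff : Tq x a - Tp x a <= 0 by lra.
apply: (maxprin hP hmu (hc0 hp hmu) (hc1 p mu) (ltW g0) g1 (E := fun x a => Tq x a - Tp x a)).
move=> y b; rewrite stepB.
have := D_eq y b; rewrite stepB.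
have : 0 <= gamma * ediff Tq y b by rewrite mulr_ge0 ?(ltW g0) // ediff_ge0.
set u := Cp Tp y b; set v := Cp Tq y b.
lra.
Qed.

Definition sdiff y := exists b, 0 < mu y b /\ trace_c q mu y b < trace_c p mu y b.

Hypothesis hpos : forall y b, 0 < mu y b -> 0 < trace_c p mu y b.

Lemma LA x a y : 0 < P x a y -> sdiff y -> 0 < Tp x a - Tq x a.
Proof.
move=> hPy [b [hmb hcb]].
have he : 0 < ediff Tq x a.
  rewrite /ediff; apply: (sum_pos (i := y)).
    move=> y'; apply: mulr_ge0; first by case: hP.
    apply: sumr_ge0 => b' _; apply: mulr_ge0; first by case: hmu.
    apply: mulr_ge0; first by rewrite subr_ge0.
    have := Tq_ge y' b'; have := g1; lra.
  apply: mulr_gt0 => //; apply: (sum_pos (i := b)).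
    move=> b'; apply: mulr_ge0; first by case: hmu.
    apply: mulr_ge0; first by rewrite subr_ge0.
    have := Tq_ge y b'; have := g1; lra.
  apply: mulr_gt0 => //; apply: mulr_gt0; first by rewrite subr_gt0.
  have := Tq_ge y b; have := g1; lra.
rewrite D_eq.
have : 0 <= Cp (fun y b => Tp y b - Tq y b) x a.
  by apply: (step_ge0 hP hmu (hc0 hp hmu)) => y' b'; exact: D_ge0.
set u := Cp _ x a.
have := mulr_gt0 g0 he; have := mulr_ge0 (ltW g0) (_ : 0 <= u).
nra.
Qed.

Lemma LB x a y b : 0 < P x a y -> 0 < mu y b -> 0 < Tp y b - Tq y b ->
  0 < Tp x a - Tq x a.
Proof.
move=> hPy hmb hD.
have hC : 0 < Cp (fun y b => Tp y b - Tq y b) x a.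
  rewrite /step; apply: (sum_pos (i := y)).
    move=> y'; apply: mulr_ge0; first by case: hP.
    apply: sumr_ge0 => b' _; apply: mulr_ge0; first by case: hmu.
    by apply: mulr_ge0; [exact: (hc0 hp hmu) | exact: D_ge0].
  apply: mulr_gt0 => //; apply: (sum_pos (i := b)).
    move=> b'; apply: mulr_ge0; first by case: hmu.
    by apply: mulr_ge0; [exact: (hc0 hp hmu) | exact: D_ge0].
  by apply: mulr_gt0 => //; apply: mulr_gt0 => //; exact: hpos.
rewrite D_eq.
have := mulr_gt0 g0 hC; have := mulr_ge0 (ltW g0) (ediff_ge0 x a).
lra.
Qed.

Lemma visit_split t x a x' : 0 < visit_prob P mu t.+1 x a x' ->
  exists y b, [/\ 0 < P x a y, 0 < mu y b & 0 < visit_prob P mu t y b x'].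
Proof.
rewrite /=; move=> /sum_pos_ex [y hy].
have [hPy hs] := pos_prod (ltac:(by case: hP)) hy.
have [b hb] := sum_pos_ex hs.
have [hmb hv] := pos_prod (ltac:(by case: hmu)) hb.
by exists y, b.
Qed.

Lemma LC t : forall x a x', 0 < visit_prob P mu t.+1 x a x' -> sdiff x' ->
  0 < Tp x a - Tq x a.
Proof.
elim: t => [|t IH] x a x' hv hs.
  have [y [b [hPy hmb hv0]]] := visit_split hv.
  move: hv0; rewrite /=; case: eqP => [e _|_]; last by rewrite ltxx.
  by subst x'; exact: (LA hPy).
have [y [b [hPy hmb hv0]]] := visit_split hv.
exact: (LB hPy hmb (IH _ _ _ hv0 hs)).
Qed.

Lemma exists_pos (f : X -> R) : \sum_y f y = 1 -> exists y, 0 < f y.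
Proof. by move=> h; apply: sum_pos_ex; rewrite h ltr01. Qed.
Lemma exists_posA (f : A -> R) : \sum_y f y = 1 -> exists y, 0 < f y.
Proof. by move=> h; apply: sum_pos_ex; rewrite h ltr01. Qed.

Lemma D_gt0 (pi : X -> A -> R) :
  (forall x a, distinguishable P pi mu x a) ->
  (forall y, (exists b, pi y b <> mu y b) -> sdiff y) ->
  forall x a, 0 < Tp x a - Tq x a.
Proof.
move=> hd hs x a.
have [[|t] [x' [hv hneq]]] := hd x a; last exact: (LC hv (hs _ hneq)).
move: hv; rewrite /=; case: eqP => [exx' _|_]; last by rewrite ltxx.
have [y hPy] : exists y, 0 < P x a y by apply: exists_pos; case: hP.
have [b hmb] : exists b, 0 < mu y b by apply: exists_posA; case: hmu.
have [[|t2] [x2 [hv2 hneq2]]] := hd y b.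
  move: hv2; rewrite /=; case: eqP => [e _|_]; last by rewrite ltxx.
  by subst x2; exact: (LA hPy (hs _ hneq2)).
exact: (LB hPy hmb (LC hv2 (hs _ hneq2))).
Qed.

End Compare.



Section CLemmas.
Variables (R : realType) (X A : finType) (pi mu : X -> A -> R).
Hypotheses (hpi : is_policy pi) (hmu : is_policy mu).

Lemma mix_div al y b : mu y b != 0 ->
  mixpol al pi mu y b / mu y b = al * (pi y b / mu y b) + (1 - al).
Proof. move=> h; rewrite /mixpol; by field. Qed.

Lemma pimu0 y b : 0 <= pi y b / mu y b.
Proof. by rewrite divr_ge0 //; [case: hpi | case: hmu]. Qed.

Lemma c_mono al y b : 0 <= al -> al <= 1 ->
  trace_c (mixpol 1 pi mu) mu y b <= trace_c (mixpol al pi mu) mu y b.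
Proof.
move=> a0 a1; rewrite /trace_c.
have [m0|m0] := eqVneq (mu y b) 0; first by rewrite m0 !invr0 !mulr0.
rewrite !mix_div // subrr mul1r addr0.
set s := pi y b / mu y b.
have s0 : 0 <= s by exact: pimu0.
set m := Num.min 1 s.
have m1 : m <= 1 by rewrite /m ge_min lexx.
have ms : m <= s by rewrite /m ge_min lexx orbT.
rewrite le_min m1 /=.
have : 0 <= al * (s - m) by rewrite mulr_ge0 // subr_ge0.
have : 0 <= (1 - al) * (1 - m) by rewrite mulr_ge0 // subr_ge0.
lra.
Qed.

Lemma c_strict al y b : 0 <= al -> al < 1 -> pi y b < mu y b ->
  trace_c (mixpol 1 pi mu) mu y b < trace_c (mixpol al pi mu) mu y b.
Proof.
move=> a0 a1 hlt.
have mpos : 0 < mu y b by apply: le_lt_trans hlt; case: hpi.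
have m0 : mu y b != 0 by rewrite gt_eqF.
rewrite /trace_c !mix_div // subrr mul1r addr0.
set s := pi y b / mu y b.
have s1 : s < 1 by rewrite /s ltr_pdivrMr // mul1r.
rewrite (min_r (ltW s1)) lt_min s1 /=.
have : 0 < (1 - al) * (1 - s) by rewrite mulr_gt0 // subr_gt0.
lra.
Qed.

Lemma c_pos al y b : 0 <= al -> al < 1 -> 0 < mu y b ->
  0 < trace_c (mixpol al pi mu) mu y b.
Proof.
move=> a0 a1 mpos.
rewrite /trace_c mix_div ?gt_eqF // lt_min ltr01 /=.
have := pimu0 y b; have : 0 <= al * (pi y b / mu y b) by rewrite mulr_ge0 // pimu0.
lra.
Qed.

Lemma diff_lt y : (exists b, pi y b <> mu y b) -> exists b, pi y b < mu y b.
Proof.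
move=> [b hb]; have [//|H] := pselect (exists b, pi y b < mu y b).
exfalso; apply: hb.
have hge : forall b', mu y b' <= pi y b'.
  by move=> b'; rewrite leNgt; apply/negP => h; apply: H; exists b'.
have hs : \sum_b' (pi y b' - mu y b') = 0.
  by rewrite sumrB; case: hpi => _ ->; case: hmu => _ ->; rewrite subrr.
have h0 : forall b', xpredT b' -> 0 <= pi y b' - mu y b'.
  by move=> b' _; rewrite subr_ge0.
have := psumr_eq0P h0 hs (i := b) erefl.
by move/eqP; rewrite subr_eq0 => /eqP.
Qed.

End CLemmas.

Lemma supnorm_lt (R : realType) (X A : finType) (x0 : X) (a0 : A) (f g : X -> A -> R) :
  (forall x a, 0 <= f x a) -> (forall x a, f x a < g x a) -> supnorm f < supnorm g.
Proof.
move=> f0 fg.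
have [[y b] _ e] := @eq_bigmax _ _ _ (0 : R) (x0, a0) xpredT
   (fun p : X * A => `|f p.1 p.2|) erefl (fun _ _ => normr_ge0 _).
rewrite /supnorm e /= ger0_norm //.
apply: lt_le_trans (fg y b) _; apply: le_trans (supnorm_ge g y b); exact: ler_norm.
Qed.

Unset Implicit Arguments.
Set Strict Implicit.

Theorem proposition3p3 (R : realType) (X A : finType) (x0 : X)
  (P : X -> A -> X -> R) (r : X -> A -> R) (gamma : R)
  (pi mu : X -> A -> R) :
  is_kernel P -> 0 < gamma -> gamma < 1 ->
  is_policy pi -> is_policy mu ->
  (forall x, exists astar : A, greedy (Qfun P r gamma pi) x = [set astar]) ->
  exists alpha : R, 0 < alpha < 1 /\
    (exists Qt, alpha_retrace P r gamma alpha pi mu Qt = Qt) /\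
    (forall Qt, alpha_retrace P r gamma alpha pi mu Qt = Qt ->
       forall x, greedy Qt x = greedy (Qfun P r gamma pi) x) /\
    contraction_rate (alpha_retrace P r gamma alpha pi mu)
      <= contraction_rate (alpha_retrace P r gamma 1 pi mu) /\
    ((forall x a, distinguishable P pi mu x a) ->
     contraction_rate (alpha_retrace P r gamma alpha pi mu)
       < contraction_rate (alpha_retrace P r gamma 1 pi mu)).
Proof.
move=> hP g0 g1 hpi hmu hg.
have [ast has] := choice hg.
set a0 := ast x0.
set Q1 := Qfun P r gamma pi.
have hlt : forall x b, b != ast x -> Q1 x b < Q1 x (ast x).
  move=> x b hb; rewrite ltNge; apply/negP => hle.
  have : greedy Q1 x b.
    move=> b'; apply: le_trans hle.
    have : greedy Q1 x (ast x) by rewrite has.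
    by apply.
  by rewrite has => /= e; move: hb; rewrite e eqxx.
set gap := \big[Num.min/1]_(p : X * A | p.2 != ast p.1) (Q1 p.1 (ast p.1) - Q1 p.1 p.2).
have gap0 : 0 < gap.
  apply: lt_bigmin; first exact: ltr01.
  by move=> [x b] /= hb; rewrite subr_gt0; exact: hlt.
have gapl : forall x b, b != ast x -> gap <= Q1 x (ast x) - Q1 x b.
  by move=> x b hb; exact: (bigmin_le_cond _ (j := (x, b)) (P := fun p : X * A => p.2 != ast p.1)
       (fun p : X * A => Q1 p.1 (ast p.1) - Q1 p.1 p.2) hb).
set B := supnorm Q1.
have B0 : 0 <= B by exact: supnorm_ge0.
set t := Num.min (1 / 2) (gap * (1 - gamma) / (8 * (B + 1))).
have hB1 : 0 < 8 * (B + 1) by apply: mulr_gt0 => //; lra.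
have ht0 : 0 < t.
  rewrite lt_min divr_gt0 //= divr_gt0 // mulr_gt0 //; lra.
have ht1 : t <= 1 / 2 by rewrite ge_min lexx.
have ht2 : t * (8 * (B + 1)) <= gap * (1 - gamma).
  by rewrite -ler_pdivlMr // ge_min lexx orbT.
set al := 1 - t.
have al0 : 0 <= al by rewrite /al; lra.
have al1 : al <= 1 by rewrite /al; lra.
have al1' : al < 1 by rewrite /al; lra.
set K := 2 * gamma * (1 - al) * B / (1 - gamma).
have hK : K < gap / 2.
  rewrite /K ltr_pdivrMr; last lra.
  have e1 : 1 - al = t by rewrite /al; ring.
  rewrite e1.
  have h5 : gamma * (t * B) <= t * B.
    by rewrite ler_piMl // ?mulr_ge0 // ?(ltW ht0) // ltW.
  nra.
set p := mixpol al pi mu.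
set q := mixpol 1 pi mu.
have hp : is_policy p by exact: mixpol_policy.
have hq : is_policy q by apply: mixpol_policy => //; lra.
exists al; split; first by apply/andP; split => //; rewrite /al; lra.
split.
  exists (Qfun P r gamma p); apply: (td_fix mu) => x a.
  rewrite td_eq; have := bellman r hP g0 g1 hp x a; lra.
split.
  move=> Qt hQt x.
  have htd := fix_td hP g0 g1 hmu hp hQt.
  have hc := close_fix hP g0 g1 hpi hmu al0 al1 htd.
  have key : forall b, b != ast x -> Qt x b < Qt x (ast x).
    move=> b hb.
    have := hc x b; have := hc x (ast x); rewrite -/K !ler_norml.
    have := gapl x b hb.
    move=> h1 /andP [h2 h3] /andP [h4 h5]; rewrite -/Q1 in h2 h3 h4 h5; lra.
  rewrite (has x); apply/seteqP; split => b /=.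
    rewrite /greedy /= => hb; case: (eqVneq b (ast x)) => // hne.
    have h6 := hb (ast x).
    have h7 := key b hne.
    exfalso; lra.
  move=> -> b'; case: (eqVneq b' (ast x)) => [->//|hne].
  exact: ltW (key b' hne).
have a0A : A := a0.
have hcq : forall y b, trace_c q mu y b <= trace_c p mu y b.
  by move=> y b; exact: c_mono.
have rhoT : forall (pp : X -> A -> R) x a,
    rho P r gamma pp mu x a = 1 - Tf P r gamma pp mu x a.
  by move=> pp x a; rewrite /Tf; ring.
rewrite /alpha_retrace -/p -/q (rate_eq r hP g0 g1 hp hmu x0 a0)
  (rate_eq r hP g0 g1 hq hmu x0 a0).
split.
  apply: supnorm_le; first exact: supnorm_ge0.
  move=> x a; rewrite ger0_norm; last exact: (rho_ge0 r hP g0 g1 hp hmu).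
  apply: le_trans (supnorm_ge _ x a); apply: le_trans (ler_norm _).
  rewrite !rhoT; have := D_ge0 r hP g0 g1 hp hq hmu hcq x a; lra.
move=> hd.
apply: (supnorm_lt x0 a0).
  by move=> x a; exact: (rho_ge0 r hP g0 g1 hp hmu).
move=> x a; rewrite !rhoT.
have hpos : forall y b, 0 < mu y b -> 0 < trace_c p mu y b.
  by move=> y b hm; exact: c_pos.
have hs : forall y, (exists b, pi y b <> mu y b) -> sdiff p q mu y.
  move=> y /(diff_lt hpi hmu) [b hb]; exists b; split.
    by apply: le_lt_trans hb; case: hpi.
  exact: c_strict.
have := D_gt0 r hP g0 g1 hp hq hmu hcq hpos hd hs x a; lra.
Qed.
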